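(* Every morphism of bigroupoids $(F,\phi):\mathcal A\to\mathcal C$ factors as $(F,\phi)=(H,\eta)\circ(G,\psi)$ with $(G,\psi):\mathcal A\to\mathcal B$ a trivial cofibration and $(H,\eta):\mathcal B\to\mathcal C$ a fibration.
   Context: A bigroupoid $\mathcal B$ consists of: a set $\mathcal B_0$ of 0-cells; for each $A,B\in\mathcal B_0$ a groupoid $\mathcal B(A,B)$ whose objects are 1-cells and whose arrows are 2-cells; composition functors $*$; identity 1-cells $1_A$; inversion functors $(-)^*$; and natural isomorphisms $\mathbf a:(h*g)*f\Rightarrow h*(g*f)$, $\mathbf l:1_B*f\Rightarrow f$, $\mathbf r:f*1_A\Rightarrow f$, $\mathbf e:f^**f\Rightarrow 1_A$, $\mathbf i:1_B\Rightarrow f*f^*$, such that the pentagon for $\mathbf a$ commutes, $(\mathrm{id}*\mathbf l)\circ\mathbf a=\mathbf r*\mathrm{id}$, and $\mathbf r_f\circ(\mathrm{id}*\mathbf e_f)\circ\mathbf a\circ(\mathbf i_f*\mathrm{id})=\mathbf l_f$. A morphism $(F,\phi):\mathcal A\to\mathcal B$ consists of a function on 0-cells, functors $F_{A,A'}:\mathcal A(A,A')\to\mathcal B(FA,FA')$ and natural isomorphisms $\phi_{g,f}:Fg*Ff\Rightarrow F(g*f)$, $\phi_A:1_{FA}\Rightarrow F1_A$, $\phi_f:(Ff)^*\Rightarrow F(f^* )$ satisfying $F\mathbf a\circ\phi\circ(\phi*\mathrm{id})=\phi\circ(\mathrm{id}*\phi)\circ\mathbf a$, $F\mathbf r\circ\phi\circ(\mathrm{id}*\phi_A)=\mathbf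 r$, $F\mathbf l\circ\phi\circ(\phi_B*\mathrm{id})=\mathbf l$, $F\mathbf e\circ\phi\circ(\phi_f*\mathrm{id})=\phi_A\circ\mathbf e$, $F\mathbf i\circ\phi_B=\phi\circ(\mathrm{id}*\phi_f)\circ\mathbf i$; composition is $(G,\gamma)\circ(F,\phi)=(GF,G\phi\circ\gamma F)$. Fibration: (1) for every 0-cell $A'$ of $\mathcal A$ and 1-cell $b:B\to FA'$ there is $a:A\to A'$ with $FA=B$, $Fa=b$; (2) for every 1-cell $a'$ and 2-cell $\beta:b\Rightarrow Fa'$ there is $\alpha:a\Rightarrow a'$ with $Fa=b$, $F\alpha=\beta$. Cofibration: injective on 0-cells and each $F_{A,A'}$ injective on objects. Weak equivalence: every 0-cell $B$ of the codomain admits a 1-cell $B\to FA'$ for some 0-cell $A'$, and each $F_{A,A'}$ is an equivalence of categories. A trivial cofibration is a cofibration that is a weak equivalence. *)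

(* Defs.v *)
Record BGData := {
  ob : Type;
  hom : ob -> ob -> Type;
  cell : forall A B, hom A B -> hom A B -> Type;
  (* vertical composition  vcomp y x = y o x  (first x, then y) *)
  vcomp : forall A B (f g h : hom A B), cell A B g h -> cell A B f g -> cell A B f h;
  id2 : forall A B (f : hom A B), cell A B f f;
  vinv : forall A B (f g : hom A B), cell A B f g -> cell A B g f;
  (* horizontal composition  hcomp g f = g * f  (first f, then g) *)
  hcomp : forall A B C, hom B C -> hom A B -> hom A C;
  hcomp2 : forall A B C (g g' : hom B C) (f f' : hom A B),
      cell B C g g' -> cell A B f f' -> cell A C (hcomp A B C g f) (hcomp A B C g' f');
  id1 : forall A, hom A A;
  inv1 : forall A B, hom A B -> hom B A;
  inv2 : forall A B (f g : hom A B), cell A B f g -> cell B A (inv1 A B f) (inv1 A B g);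
  assoc : forall A B C D (h : hom C D) (g : hom B C) (f : hom A B),
      cell A D (hcomp A B D (hcomp B C D h g) f) (hcomp A C D h (hcomp A B C g f));
  lunit : forall A B (f : hom A B), cell A B (hcomp A B B (id1 B) f) f;
  runit : forall A B (f : hom A B), cell A B (hcomp A A B f (id1 A)) f;
  ecell : forall A B (f : hom A B), cell A A (hcomp A B A (inv1 A B f) f) (id1 A);
  icell : forall A B (f : hom A B), cell B B (id1 B) (hcomp B A B f (inv1 A B f))
}.

Arguments hom {b}.
Arguments cell {b A B}.
Arguments vcomp {b A B f g h}.
Arguments id2 {b A B}.
Arguments vinv {b A B f g}.
Arguments hcomp {b A B C}.
Arguments hcomp2 {b A B C g g' f f'}.
Arguments id1 {b}.
Arguments inv1 {b A B}.
Arguments inv2 {b A B f g}.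
Arguments assoc {b A B C D}.
Arguments lunit {b A B}.
Arguments runit {b A B}.
Arguments ecell {b A B}.
Arguments icell {b A B}.

Declare Scope bg_scope.
Open Scope bg_scope.
Notation "y ∘ x" := (vcomp y x) (at level 40, left associativity) : bg_scope.
Notation "y ⋆ x" := (hcomp2 y x) (at level 35, no associativity) : bg_scope.
Notation "g ⊙ f" := (hcomp g f) (at level 35, no associativity) : bg_scope.

Record IsBigroupoid (BG : BGData) : Prop := {
  vcomp_assoc : forall (A B : ob BG) (f g h k : hom A B) (x : cell h k) (y : cell g h) (z : cell f g),
      x ∘ (y ∘ z) = (x ∘ y) ∘ z;
  vcomp_id_l : forall (A B : ob BG) (f g : hom A B) (x : cell f g), id2 g ∘ x = x;
  vcomp_id_r : forall (A B : ob BG) (f g : hom A B) (x : cell f g), x ∘ id2 f = x;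
  vinv_l : forall (A B : ob BG) (f g : hom A B) (x : cell f g), vinv x ∘ x = id2 f;
  vinv_r : forall (A B : ob BG) (f g : hom A B) (x : cell f g), x ∘ vinv x = id2 g;
  hcomp2_id : forall (A B C : ob BG) (g : hom B C) (f : hom A B), id2 g ⋆ id2 f = id2 (g ⊙ f);
  hcomp2_vcomp : forall (A B C : ob BG) (g g' g'' : hom B C) (f f' f'' : hom A B)
      (b' : cell g' g'') (b : cell g g') (a' : cell f' f'') (a : cell f f'),
      (b' ∘ b) ⋆ (a' ∘ a) = (b' ⋆ a') ∘ (b ⋆ a);
  inv2_id : forall (A B : ob BG) (f : hom A B), inv2 (id2 f) = id2 (inv1 f);
  inv2_vcomp : forall (A B : ob BG) (f g h : hom A B) (y : cell g h) (x : cell f g),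
      inv2 (y ∘ x) = inv2 y ∘ inv2 x;
  assoc_nat : forall (A B C D : ob BG) (h h' : hom C D) (g g' : hom B C) (f f' : hom A B)
      (c : cell h h') (b : cell g g') (a : cell f f'),
      assoc h' g' f' ∘ ((c ⋆ b) ⋆ a) = (c ⋆ (b ⋆ a)) ∘ assoc h g f;
  lunit_nat : forall (A B : ob BG) (f f' : hom A B) (a : cell f f'),
      lunit f' ∘ (id2 (id1 B) ⋆ a) = a ∘ lunit f;
  runit_nat : forall (A B : ob BG) (f f' : hom A B) (a : cell f f'),
      runit f' ∘ (a ⋆ id2 (id1 A)) = a ∘ runit f;
  ecell_nat : forall (A B : ob BG) (f f' : hom A B) (a : cell f f'),
      ecell f' ∘ (inv2 a ⋆ a) = id2 (id1 A) ∘ ecell f;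
  icell_nat : forall (A B : ob BG) (f f' : hom A B) (a : cell f f'),
      (a ⋆ inv2 a) ∘ icell f = icell f' ∘ id2 (id1 B);
  pentagon : forall (A B C D E : ob BG) (k : hom D E) (h : hom C D) (g : hom B C) (f : hom A B),
      (id2 k ⋆ assoc h g f) ∘ assoc k (h ⊙ g) f ∘ (assoc k h g ⋆ id2 f)
      = assoc k h (g ⊙ f) ∘ assoc (k ⊙ h) g f;
  triangle : forall (A B C : ob BG) (g : hom B C) (f : hom A B),
      (id2 g ⋆ lunit f) ∘ assoc g (id1 B) f = runit g ⋆ id2 f;
  inverse_coh : forall (A B : ob BG) (f : hom A B),
      runit f ∘ (id2 f ⋆ ecell f) ∘ assoc f (inv1 f) f ∘ (icell f ⋆ id2 f) = lunit f
}.

Record Bigroupoid := {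
  bg_data :> BGData;
  bg_ax : IsBigroupoid bg_data
}.

Record MorData (A C : BGData) := {
  m0 : ob A -> ob C;
  m1 : forall X Y : ob A, hom X Y -> hom (m0 X) (m0 Y);
  m2 : forall (X Y : ob A) (f g : hom X Y), cell f g -> cell (m1 X Y f) (m1 X Y g);
  phi_c : forall (X Y Z : ob A) (g : hom Y Z) (f : hom X Y),
      cell (m1 Y Z g ⊙ m1 X Y f) (m1 X Z (g ⊙ f));
  phi_u : forall X : ob A, cell (id1 (m0 X)) (m1 X X (id1 X));
  phi_i : forall (X Y : ob A) (f : hom X Y), cell (inv1 (m1 X Y f)) (m1 Y X (inv1 f))
}.

Arguments m0 {A C}.
Arguments m1 {A C} m {X Y}.
Arguments m2 {A C} m {X Y f g}.
Arguments phi_c {A C} m {X Y Z}.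
Arguments phi_u {A C} m.
Arguments phi_i {A C} m {X Y}.

Record IsMorphism (A C : BGData) (F : MorData A C) : Prop := {
  m2_id : forall X Y (f : hom X Y), m2 F (id2 f) = id2 (m1 F f);
  m2_vcomp : forall X Y (f g h : hom X Y) (y : cell g h) (x : cell f g),
      m2 F (y ∘ x) = m2 F y ∘ m2 F x;
  phi_c_nat : forall X Y Z (g g' : hom Y Z) (f f' : hom X Y) (b : cell g g') (a : cell f f'),
      phi_c F g' f' ∘ (m2 F b ⋆ m2 F a) = m2 F (b ⋆ a) ∘ phi_c F g f;
  phi_i_nat : forall X Y (f f' : hom X Y) (a : cell f f'),
      phi_i F f' ∘ inv2 (m2 F a) = m2 F (inv2 a) ∘ phi_i F f;
  mor_assoc : forall X Y Z W (h : hom Z W) (g : hom Y Z) (f : hom X Y),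
      m2 F (assoc h g f) ∘ phi_c F (h ⊙ g) f ∘ (phi_c F h g ⋆ id2 (m1 F f))
      = phi_c F h (g ⊙ f) ∘ (id2 (m1 F h) ⋆ phi_c F g f) ∘ assoc (m1 F h) (m1 F g) (m1 F f);
  mor_runit : forall X Y (f : hom X Y),
      m2 F (runit f) ∘ phi_c F f (id1 X) ∘ (id2 (m1 F f) ⋆ phi_u F X) = runit (m1 F f);
  mor_lunit : forall X Y (f : hom X Y),
      m2 F (lunit f) ∘ phi_c F (id1 Y) f ∘ (phi_u F Y ⋆ id2 (m1 F f)) = lunit (m1 F f);
  mor_ecell : forall X Y (f : hom X Y),
      m2 F (ecell f) ∘ phi_c F (inv1 f) f ∘ (phi_i F f ⋆ id2 (m1 F f))
      = phi_u F X ∘ ecell (m1 F f);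
  mor_icell : forall X Y (f : hom X Y),
      m2 F (icell f) ∘ phi_u F Y
      = phi_c F f (inv1 f) ∘ (id2 (m1 F f) ⋆ phi_i F f) ∘ icell (m1 F f)
}.

Arguments IsMorphism {A C}.

Definition mcomp {A B C : BGData} (H : MorData B C) (G : MorData A B) : MorData A C :=
  {| m0 := fun X => m0 H (m0 G X);
     m1 := fun X Y f => m1 H (m1 G f);
     m2 := fun X Y f g a => m2 H (m2 G a);
     phi_c := fun X Y Z g f => m2 H (phi_c G g f) ∘ phi_c H (m1 G g) (m1 G f);
     phi_u := fun X => m2 H (phi_u G X) ∘ phi_u H (m0 G X);
     phi_i := fun X Y f => m2 H (phi_i G f) ∘ phi_i H (m1 G f) |}.

Definition fibration {A C : BGData} (F : MorData A C) : Prop :=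
  (forall (A' : ob A) (B : ob C) (b : hom B (m0 F A')),
     exists (A0 : ob A) (a : hom A0 A'),
       existT (fun X => hom X (m0 F A')) (m0 F A0) (m1 F a)
       = existT (fun X => hom X (m0 F A')) B b) /\
  (forall (X Y : ob A) (a' : hom X Y) (b : hom (m0 F X) (m0 F Y)) (beta : cell b (m1 F a')),
     exists (a : hom X Y) (alpha : cell a a'),
       existT (fun x => cell x (m1 F a')) (m1 F a) (m2 F alpha)
       = existT (fun x => cell x (m1 F a')) b beta).

Definition cofibration {A C : BGData} (F : MorData A C) : Prop :=
  (forall X Y : ob A, m0 F X = m0 F Y -> X = Y) /\
  (forall (X Y : ob A) (f g : hom X Y), m1 F f = m1 F g -> f = g).

(** F_{X,Y} : A(X,Y) -> C(FX,FY) is an equivalence of categories: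
    it has a quasi-inverse functor with natural isomorphisms
    (naturality squares; all 2-cells are invertible in a groupoid). *)
Definition hom_equivalence {A C : BGData} (F : MorData A C) (X Y : ob A) : Prop :=
  exists (G1 : hom (m0 F X) (m0 F Y) -> hom X Y)
         (G2 : forall x y : hom (m0 F X) (m0 F Y), cell x y -> cell (G1 x) (G1 y))
         (eta : forall f : hom X Y, cell (G1 (m1 F f)) f)
         (eps : forall x : hom (m0 F X) (m0 F Y), cell (m1 F (G1 x)) x),
    (forall x, G2 x x (id2 x) = id2 (G1 x)) /\
    (forall x y z (b : cell y z) (a : cell x y), G2 x z (b ∘ a) = G2 y z b ∘ G2 x y a) /\
    (forall f g (a : cell f g), eta g ∘ G2 _ _ (m2 F a) = a ∘ eta f) /\
    (forall x y (b : cell x y), eps y ∘ m2 F (G2 x y b) = b ∘ eps x).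

Definition weak_equivalence {A C : BGData} (F : MorData A C) : Prop :=
  (forall B : ob C, exists A' : ob A, inhabited (hom B (m0 F A'))) /\
  (forall X Y : ob A, hom_equivalence F X Y).

Definition trivial_cofibration {A C : BGData} (F : MorData A C) : Prop :=
  cofibration F /\ weak_equivalence F.

(* Main.v *)
Require Import Defs.

Section Gen.
Context (BG : BGData) (HB : IsBigroupoid BG).

Lemma vA {X Y : ob BG} {f g h k : hom X Y} (x : cell h k) (y : cell g h) (z : cell f g) :
  x ∘ (y ∘ z) = x ∘ y ∘ z.
Proof. exact (vcomp_assoc _ HB _ _ _ _ _ _ x y z). Qed.
Lemma idl {X Y : ob BG} {f g : hom X Y} (x : cell f g) : id2 g ∘ x = x.
Proof. exact (vcomp_id_l _ HB _ _ _ _ x). Qed.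
Lemma idr {X Y : ob BG} {f g : hom X Y} (x : cell f g) : x ∘ id2 f = x.
Proof. exact (vcomp_id_r _ HB _ _ _ _ x). Qed.
Lemma invl {X Y : ob BG} {f g : hom X Y} (x : cell f g) : vinv x ∘ x = id2 f.
Proof. exact (vinv_l _ HB _ _ _ _ x). Qed.
Lemma invr {X Y : ob BG} {f g : hom X Y} (x : cell f g) : x ∘ vinv x = id2 g.
Proof. exact (vinv_r _ HB _ _ _ _ x). Qed.
Lemma hcid {X Y Z : ob BG} (g : hom Y Z) (f : hom X Y) : id2 g ⋆ id2 f = id2 (g ⊙ f).
Proof. exact (hcomp2_id _ HB _ _ _ g f). Qed.
Lemma hcc {X Y Z : ob BG} {g g' g'' : hom Y Z} {f f' f'' : hom X Y}
  (b' : cell g' g'') (b : cell g g') (a' : cell f' f'') (a : cell f f') :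
  (b' ∘ b) ⋆ (a' ∘ a) = (b' ⋆ a') ∘ (b ⋆ a).
Proof. exact (hcomp2_vcomp _ HB _ _ _ _ _ _ _ _ _ b' b a' a). Qed.
Lemma anat {W X Y Z : ob BG} {h h' : hom Y Z} {g g' : hom X Y} {f f' : hom W X}
  (c : cell h h') (b : cell g g') (a : cell f f') :
  assoc h' g' f' ∘ ((c ⋆ b) ⋆ a) = (c ⋆ (b ⋆ a)) ∘ assoc h g f.
Proof. exact (assoc_nat _ HB _ _ _ _ _ _ _ _ _ _ c b a). Qed.
Lemma lnat {X Y : ob BG} {f f' : hom X Y} (a : cell f f') :
  lunit f' ∘ (id2 (id1 Y) ⋆ a) = a ∘ lunit f.
Proof. exact (lunit_nat _ HB _ _ _ _ a). Qed.
Lemma rnat {X Y : ob BG} {f f' : hom X Y} (a : cell f f') :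
  runit f' ∘ (a ⋆ id2 (id1 X)) = a ∘ runit f.
Proof. exact (runit_nat _ HB _ _ _ _ a). Qed.
Lemma enat {X Y : ob BG} {f f' : hom X Y} (a : cell f f') :
  ecell f' ∘ (inv2 a ⋆ a) = id2 (id1 X) ∘ ecell f.
Proof. exact (ecell_nat _ HB _ _ _ _ a). Qed.
Lemma pent {V W X Y Z : ob BG} (k : hom Y Z) (h : hom X Y) (g : hom W X) (f : hom V W) :
  (id2 k ⋆ assoc h g f) ∘ assoc k (h ⊙ g) f ∘ (assoc k h g ⋆ id2 f)
  = assoc k h (g ⊙ f) ∘ assoc (k ⊙ h) g f.
Proof. exact (pentagon _ HB _ _ _ _ _ k h g f). Qed.
Lemma tri {X Y Z : ob BG} (g : hom Y Z) (f : hom X Y) :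
  (id2 g ⋆ lunit f) ∘ assoc g (id1 Y) f = runit g ⋆ id2 f.
Proof. exact (triangle _ HB _ _ _ g f). Qed.
Lemma icoh {X Y : ob BG} (f : hom X Y) :
  runit f ∘ (id2 f ⋆ ecell f) ∘ assoc f (inv1 f) f ∘ (icell f ⋆ id2 f) = lunit f.
Proof. exact (inverse_coh _ HB _ _ f). Qed.

Lemma L2 {X Y : ob BG} {f g h k : hom X Y} {p : cell g h} {q : cell f g} {r : cell f h}
  (e : p ∘ q = r) (W : cell h k) : W ∘ p ∘ q = W ∘ r.
Proof. rewrite <- vA, e. reflexivity. Qed.
Lemma L3 {X Y : ob BG} {f g h k l : hom X Y} {p : cell h k} {q : cell g h} {s : cell f g} {r : cell f k}
  (e : p ∘ q ∘ s = r) (W : cell k l) : W ∘ p ∘ q ∘ s = W ∘ r.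
Proof. rewrite <- e, !vA. reflexivity. Qed.
Lemma L4 {X Y : ob BG} {f g h k l m : hom X Y} {p : cell k l} {q : cell h k} {s : cell g h} {t : cell f g} {r : cell f l}
  (e : p ∘ q ∘ s ∘ t = r) (W : cell l m) : W ∘ p ∘ q ∘ s ∘ t = W ∘ r.
Proof. rewrite <- e, !vA. reflexivity. Qed.
Lemma L5 {X Y : ob BG} {f g h k l m n : hom X Y} {p : cell l m} {q : cell k l} {s : cell h k} {t : cell g h} {u : cell f g} {r : cell f m}
  (e : p ∘ q ∘ s ∘ t ∘ u = r) (W : cell m n) : W ∘ p ∘ q ∘ s ∘ t ∘ u = W ∘ r.
Proof. rewrite <- e, !vA. reflexivity. Qed.

Ltac nrm := repeat rewrite vA.
Ltac rw e := first [ rewrite (L5 e) | rewrite (L4 e) | rewrite (L3 e) | rewrite (L2 e) | rewrite e ]; nrm.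

Lemma cc1 {X Y : ob BG} {f g h : hom X Y} (W : cell f h) (x : cell f g) : W ∘ vinv x ∘ x = W.
Proof. rewrite <- vA, invl, idr. reflexivity. Qed.
Lemma cc2 {X Y : ob BG} {f g h : hom X Y} (W : cell g h) (x : cell f g) : W ∘ x ∘ vinv x = W.
Proof. rewrite <- vA, invr, idr. reflexivity. Qed.
Ltac simp := repeat first [rewrite cc1 | rewrite cc2 | rewrite invl | rewrite invr | rewrite idl | rewrite idr].

Lemma inv_uniq {X Y : ob BG} {f g : hom X Y} (x : cell f g) (y : cell g f) :
  y ∘ x = id2 f -> y = vinv x.
Proof. intros E. rewrite <- (idr y), <- (invr x), vA, E, idl. reflexivity. Qed.
Lemma inv_uniq' {X Y : ob BG} {f g : hom X Y} (x : cell f g) (y : cell g f) :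
  x ∘ y = id2 g -> y = vinv x.
Proof. intros E. rewrite <- (idl y), <- (invl x), <- vA, E, idr. reflexivity. Qed.
Lemma inv_inv {X Y : ob BG} {f g : hom X Y} (x : cell f g) : vinv (vinv x) = x.
Proof. symmetry. apply inv_uniq. apply invr. Qed.
Lemma inv_comp {X Y : ob BG} {f g h : hom X Y} (y : cell g h) (x : cell f g) :
  vinv (y ∘ x) = vinv x ∘ vinv y.
Proof. symmetry. apply inv_uniq. rewrite !vA. rewrite <- (vA (vinv x)), invl, idr, invl. reflexivity. Qed.
Lemma inv_id {X Y : ob BG} (f : hom X Y) : vinv (id2 f) = id2 f.
Proof. symmetry. apply inv_uniq. apply idl. Qed.
Lemma canl {X Y : ob BG} {f g h : hom X Y} (x : cell g h) (y z : cell f g) :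
  x ∘ y = x ∘ z -> y = z.
Proof. intros E. rewrite <- (idl y), <- (idl z), <- (invl x), <- !vA, E. reflexivity. Qed.
Lemma canr {X Y : ob BG} {f g h : hom X Y} (x : cell f g) (y z : cell g h) :
  y ∘ x = z ∘ x -> y = z.
Proof. intros E. rewrite <- (idr y), <- (idr z), <- (invr x), !vA, E. reflexivity. Qed.
Lemma movl {X Y : ob BG} {f g h : hom X Y} (x : cell g h) (y : cell f g) (z : cell f h) :
  y = vinv x ∘ z -> x ∘ y = z.
Proof. intros ->. rewrite vA, invr, idl. reflexivity. Qed.
Lemma movr {X Y : ob BG} {f g h : hom X Y} (x : cell f g) (y : cell g h) (z : cell f h) :
  y = z ∘ vinv x -> y ∘ x = z.
Proof. intros ->. rewrite <- vA, invl, idr. reflexivity. Qed.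

Lemma wl {X Y Z : ob BG} (g : hom Y Z) {f f' f'' : hom X Y} (a' : cell f' f'') (a : cell f f') :
  id2 g ⋆ (a' ∘ a) = (id2 g ⋆ a') ∘ (id2 g ⋆ a).
Proof. rewrite <- hcc, idl. reflexivity. Qed.
Lemma wr {X Y Z : ob BG} {g g' g'' : hom Y Z} (f : hom X Y) (b' : cell g' g'') (b : cell g g') :
  (b' ∘ b) ⋆ id2 f = (b' ⋆ id2 f) ∘ (b ⋆ id2 f).
Proof. rewrite <- hcc, idl. reflexivity. Qed.
Lemma xch1 {X Y Z : ob BG} {g g' : hom Y Z} {f f' : hom X Y} (b : cell g g') (a : cell f f') :
  (b ⋆ id2 f') ∘ (id2 g ⋆ a) = b ⋆ a.
Proof. rewrite <- hcc, idl, idr. reflexivity. Qed.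
Lemma xch2 {X Y Z : ob BG} {g g' : hom Y Z} {f f' : hom X Y} (b : cell g g') (a : cell f f') :
  (id2 g' ⋆ a) ∘ (b ⋆ id2 f) = b ⋆ a.
Proof. rewrite <- hcc, idl, idr. reflexivity. Qed.
Lemma hinv {X Y Z : ob BG} {g g' : hom Y Z} {f f' : hom X Y} (b : cell g g') (a : cell f f') :
  vinv (b ⋆ a) = vinv b ⋆ vinv a.
Proof. symmetry. apply inv_uniq. rewrite <- hcc, !invl, hcid. reflexivity. Qed.
Lemma ainat {W X Y Z : ob BG} {h h' : hom Y Z} {g g' : hom X Y} {f f' : hom W X}
  (c : cell h h') (b : cell g g') (a : cell f f') :
  vinv (assoc h' g' f') ∘ (c ⋆ (b ⋆ a)) = ((c ⋆ b) ⋆ a) ∘ vinv (assoc h g f).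
Proof. apply (canl (assoc h' g' f')). rewrite vA, invr, idl, vA, anat, <- vA, invr, idr. reflexivity. Qed.

Lemma lw_faith {X Y : ob BG} {f f' : hom X Y} (a b : cell f f') :
  id2 (id1 Y) ⋆ a = id2 (id1 Y) ⋆ b -> a = b.
Proof. intros E. apply (canr (lunit f)). rewrite <- !lnat, E. reflexivity. Qed.
Lemma rw_faith {X Y : ob BG} {f f' : hom X Y} (a b : cell f f') :
  a ⋆ id2 (id1 X) = b ⋆ id2 (id1 X) -> a = b.
Proof. intros E. apply (canr (runit f)). rewrite <- !rnat, E. reflexivity. Qed.

Lemma aconj {W X Y Z : ob BG} {h h' : hom Y Z} {g g' : hom X Y} {f f' : hom W X}
  (c : cell h h') (b : cell g g') (a : cell f f') :
  (c ⋆ b) ⋆ a = vinv (assoc h' g' f') ∘ (c ⋆ (b ⋆ a)) ∘ assoc h g f.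
Proof. rewrite <- vA, <- anat, vA, invl, idl. reflexivity. Qed.
Lemma aconj' {W X Y Z : ob BG} {h h' : hom Y Z} {g g' : hom X Y} {f f' : hom W X}
  (c : cell h h') (b : cell g g') (a : cell f f') :
  c ⋆ (b ⋆ a) = assoc h' g' f' ∘ ((c ⋆ b) ⋆ a) ∘ vinv (assoc h g f).
Proof. rewrite anat, <- vA, invr, idr. reflexivity. Qed.

Lemma K1 {X Y Z : ob BG} (g : hom Y Z) (f : hom X Y) :
  lunit (g ⊙ f) ∘ assoc (id1 Z) g f = lunit g ⋆ id2 f.
Proof.
  apply lw_faith.
  apply (canr (assoc (id1 Z) (id1 Z ⊙ g) f ∘ (assoc (id1 Z) (id1 Z) g ⋆ id2 f))).
  rewrite wl. nrm. rw (pent (id1 Z) (id1 Z) g f).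
  rw (tri (id1 Z) (g ⊙ f)). rewrite <- hcid. rewrite <- anat.
  rewrite <- tri. rewrite wr. nrm. rewrite anat. reflexivity.
Qed.

Lemma K2 {X Y Z : ob BG} (g : hom Y Z) (f : hom X Y) :
  (id2 g ⋆ runit f) ∘ assoc g f (id1 X) = runit (g ⊙ f).
Proof.
  apply rw_faith. apply (canl (assoc g f (id1 X))).
  rewrite wr. nrm. rewrite anat.
  rewrite <- (tri (g ⊙ f) (id1 X)). rewrite <- hcid. nrm. rewrite anat.
  rw (eq_sym (pent g f (id1 X) (id1 X))). rewrite <- wl. rewrite tri. reflexivity.
Qed.

Lemma lunit_idf {X Y : ob BG} (f : hom X Y) : lunit (id1 Y ⊙ f) = id2 (id1 Y) ⋆ lunit f.
Proof. apply (canl (lunit f)). rewrite lnat. reflexivity. Qed.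

Lemma lconj {X Y : ob BG} {f f' : hom X Y} (a : cell f f') :
  id2 (id1 Y) ⋆ a = vinv (lunit f') ∘ a ∘ lunit f.
Proof. rewrite <- vA, <- lnat, vA, invl, idl. reflexivity. Qed.
Lemma rconj {X Y : ob BG} {f f' : hom X Y} (a : cell f f') :
  a ⋆ id2 (id1 X) = vinv (runit f') ∘ a ∘ runit f.
Proof. rewrite <- vA, <- rnat, vA, invl, idl. reflexivity. Qed.

Lemma K3 (X : ob BG) : lunit (id1 X) = runit (id1 X).
Proof.
  apply rw_faith. rewrite <- K1, <- tri, lunit_idf. reflexivity.
Qed.

Lemma conjL {X Y Y' : ob BG} {u v : hom Y Y'} (t : cell u v) {p q : hom X Y} (x : cell p q) :
  id2 v ⋆ x = (t ⋆ id2 q) ∘ (id2 u ⋆ x) ∘ vinv (t ⋆ id2 p).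
Proof. rewrite xch1, <- (xch2 t x), <- vA, invr, idr. reflexivity. Qed.
Lemma conjR {X W : ob BG} {u v : hom X X} (t : cell u v) {p q : hom X W} (x : cell p q) :
  x ⋆ id2 v = (id2 q ⋆ t) ∘ (x ⋆ id2 u) ∘ vinv (id2 p ⋆ t).
Proof. rewrite xch2, <- (xch1 x t), <- vA, invr, idr. reflexivity. Qed.

Lemma WL_inj {X Y Z : ob BG} (c : hom Y Z) {p q : hom X Y} (x y : cell p q) :
  id2 c ⋆ x = id2 c ⋆ y -> x = y.
Proof.
  intros E. apply lw_faith.
  assert (E2 : id2 (inv1 c ⊙ c) ⋆ x = id2 (inv1 c ⊙ c) ⋆ y).
  { rewrite <- hcid, !aconj, E. reflexivity. }
  rewrite (conjL (ecell c) x), (conjL (ecell c) y), E2. reflexivity.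
Qed.

Lemma WR_inj {X Y W : ob BG} (h : hom X Y) {p q : hom Y W} (x y : cell p q) :
  x ⋆ id2 h = y ⋆ id2 h -> x = y.
Proof.
  intros E. apply rw_faith.
  assert (E2 : x ⋆ id2 (h ⊙ inv1 h) = y ⋆ id2 (h ⊙ inv1 h)).
  { rewrite <- hcid, !aconj', E. reflexivity. }
  apply (canl (id2 q ⋆ icell h)). rewrite !xch2, <- (xch1 x (icell h)), <- (xch1 y (icell h)), E2. reflexivity.
Qed.

Definition cancelL {X Y Z : ob BG} (c : hom Y Z) {p q : hom X Y} (t : cell (c ⊙ p) (c ⊙ q)) : cell p q :=
  lunit q ∘ (ecell c ⋆ id2 q) ∘ vinv (assoc (inv1 c) c q) ∘ (id2 (inv1 c) ⋆ t)
  ∘ assoc (inv1 c) c p ∘ vinv (ecell c ⋆ id2 p) ∘ vinv (lunit p).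

Lemma WL_cancel {X Y Z : ob BG} (c : hom Y Z) {p q : hom X Y} (t : cell (c ⊙ p) (c ⊙ q)) :
  id2 c ⋆ cancelL c t = t.
Proof.
  apply (WL_inj (inv1 c)).
  assert (E : forall z : cell p q, id2 (inv1 c) ⋆ (id2 c ⋆ z)
     = assoc (inv1 c) c q ∘ vinv (ecell c ⋆ id2 q) ∘ vinv (lunit q) ∘ z ∘ lunit p ∘ (ecell c ⋆ id2 p)
       ∘ vinv (assoc (inv1 c) c p)).
  { intros z. rewrite aconj', hcid, (conjL (vinv (ecell c)) z), !hinv, !inv_inv, !inv_id, lconj.
    nrm. reflexivity. }
  rewrite E. unfold cancelL. nrm.
  simp. reflexivity.
Qed.
Definition cancelR {X Y W : ob BG} (h : hom X Y) {p q : hom Y W} (t : cell (p ⊙ h) (q ⊙ h)) : cell p q :=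
  runit q ∘ vinv (id2 q ⋆ icell h) ∘ assoc q h (inv1 h) ∘ (t ⋆ id2 (inv1 h))
  ∘ vinv (assoc p h (inv1 h)) ∘ (id2 p ⋆ icell h) ∘ vinv (runit p).

Lemma WR_cancel {X Y W : ob BG} (h : hom X Y) {p q : hom Y W} (t : cell (p ⊙ h) (q ⊙ h)) :
  cancelR h t ⋆ id2 h = t.
Proof.
  apply (WR_inj (inv1 h)).
  rewrite aconj, hcid, (conjR (icell h)), rconj. unfold cancelR. nrm. simp. reflexivity.
Qed.

Lemma WL_cancel_uniq {X Y Z : ob BG} (c : hom Y Z) {p q : hom X Y} (t : cell (c ⊙ p) (c ⊙ q)) (x : cell p q) :
  id2 c ⋆ x = t -> cancelL c t = x.
Proof. intros E. apply (WL_inj c). rewrite WL_cancel. symmetry. exact E. Qed.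

Lemma wlinv {X Y Z : ob BG} (g : hom Y Z) {f f' : hom X Y} (a : cell f f') :
  vinv (id2 g ⋆ a) = id2 g ⋆ vinv a.
Proof. rewrite hinv, inv_id. reflexivity. Qed.
Lemma wrinv {X Y Z : ob BG} {g g' : hom Y Z} (f : hom X Y) (a : cell g g') :
  vinv (a ⋆ id2 f) = vinv a ⋆ id2 f.
Proof. rewrite hinv, inv_id. reflexivity. Qed.

Lemma K1i {X Y Z : ob BG} (g : hom Y Z) (f : hom X Y) :
  (lunit g ⋆ id2 f) ∘ vinv (assoc (id1 Z) g f) = lunit (g ⊙ f).
Proof. rewrite <- K1. simp. reflexivity. Qed.
Lemma triI {X Y Z : ob BG} (g : hom Y Z) (f : hom X Y) :
  (runit g ⋆ id2 f) ∘ vinv (assoc g (id1 Y) f) = id2 g ⋆ lunit f.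
Proof. rewrite <- tri. simp. reflexivity. Qed.

Lemma hc_cancel_r {X Y Z : ob BG} {g g' : hom Y Z} {f f' : hom X Y} (x y : cell g g') (t : cell f f') :
  x ⋆ t = y ⋆ t -> x ⋆ id2 f = y ⋆ id2 f.
Proof.
  intros E. assert (K : forall z : cell g g', z ⋆ id2 f = (id2 g' ⋆ vinv t) ∘ (z ⋆ t)).
  { intros z. rewrite <- hcc, idl, invl. reflexivity. }
  rewrite !K, E. reflexivity.
Qed.

Lemma rnat_inv {X Y : ob BG} {f f' : hom X Y} (a : cell f f') :
  vinv (runit f') ∘ a = (a ⋆ id2 (id1 X)) ∘ vinv (runit f).
Proof. rewrite rconj. simp. reflexivity. Qed.
Lemma triA {X Y Z : ob BG} (g : hom Y Z) (f : hom X Y) :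
  assoc g (id1 Y) f ∘ (vinv (runit g) ⋆ id2 f) = id2 g ⋆ vinv (lunit f).
Proof.
  rewrite <- wlinv. apply inv_uniq'. rewrite vA, tri, <- hcc, invr, idl, hcid. reflexivity.
Qed.
Lemma K2i {X Y Z : ob BG} (g : hom Y Z) (f : hom X Y) :
  vinv (assoc g f (id1 X)) ∘ (id2 g ⋆ vinv (runit f)) = vinv (runit (g ⊙ f)).
Proof. rewrite <- K2, inv_comp, wlinv. reflexivity. Qed.

Section Pent.
Context {V W X' Y Z : ob BG} (x : hom Y Z) (y : hom X' Y) (z : hom W X') (w : hom V W).
Lemma PI : vinv (assoc x y z ⋆ id2 w) ∘ vinv (assoc x (y ⊙ z) w) ∘ (id2 x ⋆ vinv (assoc y z w))
  = vinv (assoc (x ⊙ y) z w) ∘ vinv (assoc x y (z ⊙ w)).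
Proof.
  rewrite <- wlinv, <- !inv_comp. f_equal. nrm. apply pent.
Qed.
Lemma P1 : vinv (assoc x (y ⊙ z) w) ∘ (id2 x ⋆ vinv (assoc y z w))
  = (assoc x y z ⋆ id2 w) ∘ vinv (assoc (x ⊙ y) z w) ∘ vinv (assoc x y (z ⊙ w)).
Proof. apply (canl (vinv (assoc x y z ⋆ id2 w))). nrm. rewrite PI. simp. reflexivity. Qed.
Lemma P2 : vinv (assoc x y (z ⊙ w)) ∘ (id2 x ⋆ assoc y z w)
  = assoc (x ⊙ y) z w ∘ (vinv (assoc x y z) ⋆ id2 w) ∘ vinv (assoc x (y ⊙ z) w).
Proof. apply (canl (assoc x y (z ⊙ w))). nrm. rewrite <- pent, <- wrinv. simp. reflexivity. Qed.
Lemma P3 : vinv (assoc x (y ⊙ z) w) ∘ (id2 x ⋆ vinv (assoc y z w)) ∘ assoc x y (z ⊙ w)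
  = (assoc x y z ⋆ id2 w) ∘ vinv (assoc (x ⊙ y) z w).
Proof. rewrite P1. simp. reflexivity. Qed.
Lemma P4 : vinv (assoc (x ⊙ y) z w) ∘ vinv (assoc x y (z ⊙ w)) ∘ (id2 x ⋆ assoc y z w)
  = (vinv (assoc x y z) ⋆ id2 w) ∘ vinv (assoc x (y ⊙ z) w).
Proof.
  rewrite <- PI, wrinv, <- vA, <- wl, invl, hcid, idr. reflexivity.
Qed.
End Pent.

Definition Tsq {Z1 Z2 Z3 Y1 Y2 Y3 : ob BG} {c1 : hom Z1 Y1} {c2 : hom Z2 Y2} {c3 : hom Z3 Y3}
  {k2 : hom Z2 Z3} {k1 : hom Z1 Z2} {u2 : hom Y2 Y3} {u1 : hom Y1 Y2}
  (r2 : cell (c3 ⊙ k2) (u2 ⊙ c2)) (r1 : cell (c2 ⊙ k1) (u1 ⊙ c1)) : cell (c3 ⊙ (k2 ⊙ k1)) ((u2 ⊙ u1) ⊙ c1) :=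
  vinv (assoc u2 u1 c1) ∘ (id2 u2 ⋆ r1) ∘ assoc u2 c2 k1 ∘ (r2 ⋆ id2 k1) ∘ vinv (assoc c3 k2 k1).

Lemma TsqR {Z1 Z2 Z3 Y1 Y2 Y3 : ob BG} {c1 : hom Z1 Y1} {c2 : hom Z2 Y2} {c3 : hom Z3 Y3}
  {k2 : hom Z2 Z3} {k1 : hom Z1 Z2} {u2 : hom Y2 Y3} {u1 u1' : hom Y1 Y2}
  (r2 : cell (c3 ⊙ k2) (u2 ⊙ c2)) (t : cell u1 u1') (r1 : cell (c2 ⊙ k1) (u1 ⊙ c1)) :
  Tsq r2 ((t ⋆ id2 c1) ∘ r1) = ((id2 u2 ⋆ t) ⋆ id2 c1) ∘ Tsq r2 r1.
Proof. unfold Tsq. rewrite wl. nrm. rw (ainat (id2 u2) t (id2 c1)). reflexivity. Qed.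
Lemma TsqL {Z1 Z2 Z3 Y1 Y2 Y3 : ob BG} {c1 : hom Z1 Y1} {c2 : hom Z2 Y2} {c3 : hom Z3 Y3}
  {k2 : hom Z2 Z3} {k1 : hom Z1 Z2} {u2 u2' : hom Y2 Y3} {u1 : hom Y1 Y2}
  (t : cell u2 u2') (r2 : cell (c3 ⊙ k2) (u2 ⊙ c2)) (r1 : cell (c2 ⊙ k1) (u1 ⊙ c1)) :
  Tsq ((t ⋆ id2 c2) ∘ r2) r1 = ((t ⋆ id2 u1) ⋆ id2 c1) ∘ Tsq r2 r1.
Proof.
  unfold Tsq. rewrite wr. nrm. rw (anat t (id2 c2) (id2 k1)). rewrite hcid.
  rw (xch2 t r1). rewrite <- (xch1 t r1). nrm. rewrite <- (hcid u1 c1).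
  rw (ainat t (id2 u1) (id2 c1)). reflexivity.
Qed.

Lemma paste {Z1 Z2 Z3 Z4 Y1 Y2 Y3 Y4 : ob BG} {c1 : hom Z1 Y1} {c2 : hom Z2 Y2} {c3 : hom Z3 Y3} {c4 : hom Z4 Y4}
  {k3 : hom Z3 Z4} {k2 : hom Z2 Z3} {k1 : hom Z1 Z2} {u3 : hom Y3 Y4} {u2 : hom Y2 Y3} {u1 : hom Y1 Y2}
  (r3 : cell (c4 ⊙ k3) (u3 ⊙ c3)) (r2 : cell (c3 ⊙ k2) (u2 ⊙ c2)) (r1 : cell (c2 ⊙ k1) (u1 ⊙ c1)) :
  Tsq r3 (Tsq r2 r1) ∘ (id2 c4 ⋆ assoc k3 k2 k1) = (assoc u3 u2 u1 ⋆ id2 c1) ∘ Tsq (Tsq r3 r2) r1.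
Proof.
  unfold Tsq. rewrite !wl, !wr. nrm.
  rewrite P1. rw (ainat (id2 u3) (id2 u2) r1). rewrite hcid.
  rw (P2 u3 u2 c2 k1). rw (ainat (id2 u3) r2 (id2 k1)).
  rw (P3 u3 c3 k2 k1). rewrite <- (hcid k2 k1). rw (ainat r3 (id2 k2) (id2 k1)).
  rw (P4 c4 k3 k2 k1). reflexivity.
Qed.

End Gen.


Ltac nrm H := repeat rewrite (vA _ H).
Ltac rw H e := first [ rewrite (L5 _ H e) | rewrite (L4 _ H e) | rewrite (L3 _ H e) | rewrite (L2 _ H e) | rewrite e ]; nrm H.
Ltac simp H := repeat first [rewrite (cc1 _ H) | rewrite (cc2 _ H) | rewrite (invl _ H) | rewrite (invr _ H) | rewrite (idl _ H) | rewrite (idr _ H)].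

Section Cons.
Context {A C : Bigroupoid} (F : MorData A C) (HF : IsMorphism F).
Let HA := bg_ax A.
Let HC := bg_ax C.

Record Bob := mkBob { bZ : ob C; bX : ob A; bc : hom bZ (m0 F bX) }.
Record Bhom (P Q : Bob) := mkBh { bf : hom (bX P) (bX Q); bh : hom (bZ P) (bZ Q);
  bs : cell (bc Q ⊙ bh) (m1 F bf ⊙ bc P) }.
Arguments mkBh {P Q}.
Arguments bf {P Q}.
Arguments bh {P Q}.
Arguments bs {P Q}.

Definition Scomp {P Q R : Bob} (b : Bhom Q R) (a : Bhom P Q) :
  cell (bc R ⊙ (bh b ⊙ bh a)) (m1 F (bf b ⊙ bf a) ⊙ bc P) :=
  (phi_c F (bf b) (bf a) ⋆ id2 (bc P)) ∘ Tsq _ (bs b) (bs a).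

Definition bcomp (P Q R : Bob) (b : Bhom Q R) (a : Bhom P Q) : Bhom P R :=
  mkBh (bf b ⊙ bf a) (bh b ⊙ bh a) (Scomp b a).

Definition sid (P : Bob) : cell (bc P ⊙ id1 (bZ P)) (m1 F (id1 (bX P)) ⊙ bc P) :=
  (phi_u F (bX P) ⋆ id2 (bc P)) ∘ vinv (lunit (bc P)) ∘ runit (bc P).

Definition bid (P : Bob) : Bhom P P := mkBh (id1 (bX P)) (id1 (bZ P)) (sid P).

Definition Rinv {P Q : Bob} (a : Bhom P Q) :
  cell (bc P ⊙ (inv1 (bh a) ⊙ bh a)) (m1 F (inv1 (bf a) ⊙ bf a) ⊙ bc P) :=
  vinv (m2 F (ecell (bf a)) ⋆ id2 (bc P)) ∘ sid P ∘ (id2 (bc P) ⋆ ecell (bh a)).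

Definition sinv {P Q : Bob} (a : Bhom P Q) : cell (bc P ⊙ inv1 (bh a)) (m1 F (inv1 (bf a)) ⊙ bc Q) :=
  cancelR _ (bh a)
   (vinv (assoc (m1 F (inv1 (bf a))) (bc Q) (bh a)) ∘ (id2 (m1 F (inv1 (bf a))) ⋆ vinv (bs a))
    ∘ assoc (m1 F (inv1 (bf a))) (m1 F (bf a)) (bc P) ∘ vinv (phi_c F (inv1 (bf a)) (bf a) ⋆ id2 (bc P))
    ∘ Rinv a ∘ assoc (bc P) (inv1 (bh a)) (bh a)).

Definition binv (P Q : Bob) (a : Bhom P Q) : Bhom Q P :=
  mkBh (inv1 (bf a)) (inv1 (bh a)) (sinv a).

Definition Bdata : BGData := {|
  ob := Bob; hom := Bhom;
  cell := fun P Q a b => cell (bf a) (bf b);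
  vcomp := fun P Q a b c y x => @vcomp A _ _ _ _ _ y x;
  id2 := fun P Q a => @id2 A _ _ (bf a);
  vinv := fun P Q a b x => @vinv A _ _ _ _ x;
  hcomp := bcomp;
  hcomp2 := fun P Q R b b' a a' y x => @hcomp2 A _ _ _ _ _ _ _ y x;
  id1 := bid; inv1 := binv;
  inv2 := fun P Q a b x => @inv2 A _ _ _ _ x;
  assoc := fun P Q R S c b a => assoc (bf c) (bf b) (bf a);
  lunit := fun P Q a => lunit (bf a);
  runit := fun P Q a => runit (bf a);
  ecell := fun P Q a => ecell (bf a);
  icell := fun P Q a => icell (bf a) |}.

Lemma Bax : IsBigroupoid Bdata.
Proof.
  destruct HA. constructor; intros; simpl; eauto.
Qed.

Definition Bgr : Bigroupoid := {| bg_data := Bdata; bg_ax := Bax |}.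

Definition Gob (X : ob A) : Bob := mkBob (m0 F X) X (id1 (m0 F X)).
Definition Ghom {X Y : ob A} (f : hom X Y) : Bhom (Gob X) (Gob Y) :=
  @mkBh (Gob X) (Gob Y) f (m1 F f) (vinv (runit (m1 F f)) ∘ lunit (m1 F f)).

Definition Gm : MorData A Bgr := Build_MorData A Bgr
  Gob
  (fun X Y f => Ghom f)
  (fun X Y f g a => a)
  (fun X Y Z g f => @id2 A _ _ (g ⊙ f))
  (fun X => @id2 A _ _ (id1 X))
  (fun X Y f => @id2 A _ _ (inv1 f)).

Definition Hm2 {P Q : Bob} (a a' : Bhom P Q) (x : cell (bf a) (bf a')) : cell (bh a) (bh a') :=
  cancelL _ (bc Q) (vinv (bs a') ∘ (m2 F x ⋆ id2 (bc P)) ∘ bs a).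

Definition Hm : MorData Bgr C := Build_MorData Bgr C
  bZ
  (fun P Q a => bh a)
  (fun P Q a b x => Hm2 a b x)
  (fun P Q R b a => id2 (bh b ⊙ bh a))
  (fun P => id2 (id1 (bZ P)))
  (fun P Q a => id2 (inv1 (bh a))).

Lemma Hchar {P Q : Bob} (a a' : Bhom P Q) (x : cell (bf a) (bf a')) :
  id2 (bc Q) ⋆ Hm2 a a' x = vinv (bs a') ∘ (m2 F x ⋆ id2 (bc P)) ∘ bs a.
Proof. apply (WL_cancel _ HC). Qed.
Lemma Hsq {P Q : Bob} (a a' : Bhom P Q) (x : cell (bf a) (bf a')) :
  bs a' ∘ (id2 (bc Q) ⋆ Hm2 a a' x) = (m2 F x ⋆ id2 (bc P)) ∘ bs a.
Proof. rewrite Hchar. nrm HC. simp HC. reflexivity. Qed.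
Lemma Huniq {P Q : Bob} (a a' : Bhom P Q) (x : cell (bf a) (bf a')) (y : cell (bh a) (bh a')) :
  bs a' ∘ (id2 (bc Q) ⋆ y) = (m2 F x ⋆ id2 (bc P)) ∘ bs a -> Hm2 a a' x = y.
Proof.
  intros E. apply (WL_cancel_uniq _ HC). rewrite <- (vA _ HC), <- E. nrm HC. simp HC. reflexivity.
Qed.

Lemma H_id {P Q : Bob} (a : Bhom P Q) : Hm2 a a (id2 (bf a)) = id2 (bh a).
Proof.
  apply Huniq. rewrite (m2_id _ _ _ HF), !(hcid _ HC), (idr _ HC), (idl _ HC). reflexivity.
Qed.
Lemma H_comp {P Q : Bob} (a a' a'' : Bhom P Q) (y : cell (bf a') (bf a'')) (x : cell (bf a) (bf a')) :
  Hm2 a a'' (y ∘ x) = Hm2 a' a'' y ∘ Hm2 a a' x.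
Proof.
  apply Huniq. rewrite (wl _ HC). nrm HC. rewrite Hsq. rw HC (Hsq a a' x).
  rewrite (m2_vcomp _ _ _ HF), (wr _ HC). nrm HC. reflexivity.
Qed.

Lemma H_hc {P Q R : Bob} (b b' : Bhom Q R) (a a' : Bhom P Q) (y : cell (bf b) (bf b')) (x : cell (bf a) (bf a')) :
  Hm2 (bcomp P Q R b a) (bcomp P Q R b' a') (y ⋆ x) = Hm2 b b' y ⋆ Hm2 a a' x.
Proof.
  apply Huniq. change (bs (bcomp P Q R b' a')) with (Scomp b' a').
  change (bs (bcomp P Q R b a)) with (Scomp b a). unfold Scomp, Tsq. nrm HC.
  set (Hy := Hm2 b b' y). set (Hx := Hm2 a a' x).
  rw HC (ainat _ HC (id2 (bc R)) Hy Hx).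
  rewrite <- (xch1 _ HC (id2 (bc R) ⋆ Hy) Hx).
  nrm HC.   rw HC (eq_sym (wr _ HC (bh a') (bs b') (id2 (bc R) ⋆ Hy))).
  unfold Hy. rewrite Hsq. fold Hy. rewrite (wr _ HC). nrm HC.
  rw HC (xch1 _ HC (bs b) Hx). rewrite <- (xch2 _ HC (bs b) Hx). nrm HC.
  rw HC (xch1 _ HC (m2 F y ⋆ id2 (bc Q)) Hx).
  rw HC (anat _ HC (m2 F y) (id2 (bc Q)) Hx).
  rewrite <- (xch2 _ HC (m2 F y) (id2 (bc Q) ⋆ Hx)). nrm HC.
  rw HC (eq_sym (wl _ HC (m1 F (bf b')) (bs a') (id2 (bc Q) ⋆ Hx))).
  unfold Hx. rewrite Hsq. rewrite (wl _ HC). nrm HC.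
  rw HC (xch2 _ HC (m2 F y) (bs a)). rewrite <- (xch1 _ HC (m2 F y) (bs a)). nrm HC.
  rw HC (xch2 _ HC (m2 F y) (m2 F x ⋆ id2 (bc P))).
  rw HC (ainat _ HC (m2 F y) (m2 F x) (id2 (bc P))).
  rewrite <- (wr _ HC).
  rewrite (phi_c_nat _ _ _ HF), (wr _ HC). nrm HC. reflexivity.
Qed.

Lemma H_assoc {P Q R S : Bob} (c : Bhom R S) (b : Bhom Q R) (a : Bhom P Q) :
  Hm2 (bcomp P Q S (bcomp Q R S c b) a) (bcomp P R S c (bcomp P Q R b a)) (assoc (bf c) (bf b) (bf a))
  = assoc (bh c) (bh b) (bh a).
Proof.
  apply Huniq.
  change (bs (bcomp P R S c (bcomp P Q R b a))) with (Scomp c (bcomp P Q R b a)).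
  change (bs (bcomp P Q S (bcomp Q R S c b) a)) with (Scomp (bcomp Q R S c b) a).
  unfold Scomp, bcomp. simpl. unfold Scomp. rewrite (TsqR _ HC), (TsqL _ HC). nrm HC.
  rw HC (paste _ HC (bs c) (bs b) (bs a)).
  rewrite <- !(wr _ HC). rewrite (mor_assoc _ _ _ HF). reflexivity.
Qed.

Lemma sid_eq (P : Bob) : sid P = (phi_u F (bX P) ⋆ id2 (bc P)) ∘ (vinv (lunit (bc P)) ∘ runit (bc P)).
Proof. unfold sid. rewrite (vA _ HC). reflexivity. Qed.

Lemma H_lunit {P Q : Bob} (a : Bhom P Q) :
  Hm2 (bcomp P Q Q (bid Q) a) a (lunit (bf a)) = lunit (bh a).
Proof.
  apply Huniq. unfold bcomp, bid. simpl. unfold Scomp. simpl.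
  rewrite sid_eq, (TsqL _ HC). nrm HC. rewrite <- !(wr _ HC).
  rewrite (mor_lunit _ _ _ HF). unfold Tsq. nrm HC.
  rw HC (K1i _ HC (m1 F (bf a)) (bc P)). rw HC (lnat _ HC (bs a)).
  rw HC (K1 _ HC (bc Q) (bh a)). rw HC (eq_sym (wr _ HC (bh a) (lunit (bc Q)) (vinv (lunit (bc Q)) ∘ runit (bc Q)))).
  rewrite (invr _ HC), (idl _ HC). rw HC (triI _ HC (bc Q) (bh a)). reflexivity.
Qed.

Lemma H_ecell {P Q : Bob} (a : Bhom P Q) :
  Hm2 (bcomp P Q P (binv P Q a) a) (bid P) (ecell (bf a)) = ecell (bh a).
Proof.
  apply Huniq. unfold bcomp, bid, binv. simpl. unfold Scomp, Tsq. simpl.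
  unfold sinv. rewrite (WR_cancel _ HC). nrm HC. simp HC.
  rw HC (eq_sym (wl _ HC (m1 F (inv1 (bf a))) (bs a) (vinv (bs a)))). rewrite (invr _ HC), (hcid _ HC), (idr _ HC). simp HC.
  unfold Rinv. nrm HC. simp HC. reflexivity.
Qed.

Lemma H_runit {Q R : Bob} (b : Bhom Q R) :
  Hm2 (bcomp Q Q R b (bid Q)) b (runit (bf b)) = runit (bh b).
Proof.
  apply (WR_inj _ HC (id1 (bZ Q))).
  assert (E : @Hm2 Q R (bcomp Q Q R (bcomp Q Q R b (bid Q)) (bid Q)) (bcomp Q Q R b (bid Q))
     ((id2 (bf b) ⋆ lunit (bf (bid Q))) ∘ assoc (bf b) (id1 (bX Q)) (bf (bid Q)))
     = @Hm2 Q R (bcomp Q Q R (bcomp Q Q R b (bid Q)) (bid Q)) (bcomp Q Q R b (bid Q))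
     (runit (bf b) ⋆ id2 (bf (bid Q)))).
  { f_equal. apply (tri _ HA). }
  rewrite (H_comp (bcomp Q Q R (bcomp Q Q R b (bid Q)) (bid Q)) (bcomp Q Q R b (bcomp Q Q Q (bid Q) (bid Q))) (bcomp Q Q R b (bid Q))) in E.
  rewrite !H_hc, !H_id, H_lunit, H_assoc in E.
  simpl in E |- *. rewrite <- E. apply (tri _ HC).
Qed.

Lemma H_icell {P Q : Bob} (a : Bhom P Q) :
  Hm2 (bid Q) (bcomp Q P Q a (binv P Q a)) (icell (bf a)) = icell (bh a).
Proof.
  apply (WR_inj _ HC (bh a)).
  assert (E : @Hm2 P Q (bcomp P Q Q (bid Q) a) a
     (runit (bf a) ∘ (id2 (bf a) ⋆ ecell (bf a)) ∘ assoc (bf a) (inv1 (bf a)) (bf a) ∘ (icell (bf a) ⋆ id2 (bf a)))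
     = @Hm2 P Q (bcomp P Q Q (bid Q) a) a (lunit (bf a))).
  { f_equal. apply (icoh _ HA). }
  rewrite (H_comp (bcomp P Q Q (bid Q) a) (bcomp P Q Q (bcomp Q P Q a (binv P Q a)) a) a) in E.
  rewrite (H_comp (bcomp P Q Q (bcomp Q P Q a (binv P Q a)) a) (bcomp P P Q a (bcomp P Q P (binv P Q a) a)) a) in E.
  rewrite (H_comp (bcomp P P Q a (bcomp P Q P (binv P Q a) a)) (bcomp P P Q a (bid P)) a) in E.
  rewrite !H_hc, !H_id, H_lunit, H_assoc, H_runit, H_ecell in E.
  simpl in E. rewrite <- (icoh _ HC) in E.
  apply (canl _ HC (runit (bh a) ∘ (id2 (bh a) ⋆ ecell (bh a)) ∘ assoc (bh a) (inv1 (bh a)) (bh a))).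
  nrm HC. exact E.
Qed.

Lemma H_inv2 {P Q : Bob} (a a' : Bhom P Q) (x : cell (bf a) (bf a')) :
  Hm2 (binv P Q a) (binv P Q a') (inv2 x) = inv2 (Hm2 a a' x).
Proof.
  apply (WR_inj _ HC (bh a)).
  assert (E : @Hm2 P P (bcomp P Q P (binv P Q a) a) (bid P) (ecell (bf a') ∘ (inv2 x ⋆ x))
     = @Hm2 P P (bcomp P Q P (binv P Q a) a) (bid P) (id2 (id1 (bX P)) ∘ ecell (bf a))).
  { f_equal. apply (enat _ HA). }
  rewrite (H_comp (bcomp P Q P (binv P Q a) a) (bcomp P Q P (binv P Q a') a') (bid P)) in E.
  rewrite (H_comp (bcomp P Q P (binv P Q a) a) (bid P) (bid P)) in E.
  rewrite H_hc, !H_ecell in E.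
  rewrite (H_id (bid P) : Hm2 (bid P) (bid P) (id2 (id1 (bX P))) = id2 (id1 (bZ P))) in E.
  simpl in E. rewrite <- (enat _ HC (Hm2 a a' x)) in E.
  apply (canl _ HC) in E. exact (hc_cancel_r _ HC _ _ _ E).
Qed.

Lemma Hmor : IsMorphism Hm.
Proof.
  constructor; intros; simpl;
    repeat first [rewrite (hcid _ HC) | rewrite (idl _ HC) | rewrite (idr _ HC)].
  - apply H_id.
  - apply H_comp.
  - symmetry. apply H_hc.
  - symmetry. apply H_inv2.
  - apply H_assoc.
  - apply H_runit.
  - apply H_lunit.
  - apply H_ecell.
  - apply H_icell.
Qed.

Lemma Gmor : IsMorphism Gm.
Proof.
  constructor; intros; simpl;
    repeat first [rewrite (hcid _ HA) | rewrite (idl _ HA) | rewrite (idr _ HA)]; reflexivity.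
Qed.

Lemma Hfib : fibration Hm.
Proof.
  split.
  - intros A' B b.
    exists (mkBob B (bX A') (bc A' ⊙ b)).
    exists (@mkBh (mkBob B (bX A') (bc A' ⊙ b)) A' (id1 (bX A')) b
              ((phi_u F (bX A') ⋆ id2 (bc A' ⊙ b)) ∘ vinv (lunit (bc A' ⊙ b)))).
    reflexivity.
  - intros X Y a' b beta.
    exists (mkBh (bf a') b (bs a' ∘ (id2 (bc Y) ⋆ beta))).
    exists (id2 (bf a')).
    assert (E : Hm2 (mkBh (bf a') b (bs a' ∘ (id2 (bc Y) ⋆ beta))) a' (id2 (bf a')) = beta).
    { apply Huniq. simpl. rewrite (m2_id _ _ _ HF), (hcid _ HC), (idl _ HC). reflexivity. }
    exact (f_equal (existT (fun x : hom (bZ X) (bZ Y) => cell x (bh a')) b) E).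
Qed.

Lemma Gtc : trivial_cofibration Gm.
Proof.
  split; [split|split].
  - intros X Y E. exact (f_equal bX E).
  - intros X Y f g E. exact (f_equal (@bf (Gob X) (Gob Y)) E).
  - intros P. exists (bX P). constructor.
    exact (@mkBh P (Gob (bX P)) (id1 (bX P)) (bc P) (phi_u F (bX P) ⋆ id2 (bc P))).
  - intros X Y.
    exists (fun x => bf x), (fun x y c => c), (fun f => id2 f), (fun x => id2 (bf x)).
    simpl. split; [|split; [|split]]; intros; try reflexivity;
      rewrite (idl _ HA), (idr _ HA); reflexivity.
Qed.

Lemma M2 {X Y : ob A} {f g : hom X Y} (a : cell f g) : Hm2 (Ghom f) (Ghom g) a = m2 F a.
Proof.
  apply Huniq. simpl. rewrite (lconj _ HC), (rconj _ HC). nrm HC. simp HC. reflexivity.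
Qed.

Lemma MC {X Y Z : ob A} (g : hom Y Z) (f : hom X Y) :
  Hm2 (bcomp (Gob X) (Gob Y) (Gob Z) (Ghom g) (Ghom f)) (Ghom (g ⊙ f)) (id2 (g ⊙ f)) = phi_c F g f.
Proof.
  apply Huniq. unfold bcomp. simpl. unfold Scomp, Tsq. simpl.
  rewrite (m2_id _ _ _ HF), (hcid _ HC), (idl _ HC).
  rewrite (lconj _ HC). nrm HC. simp HC. rw HC (rnat_inv _ HC (phi_c F g f)).
  rewrite !(wl _ HC), !(wr _ HC). nrm HC.
  rw HC (K1i _ HC (m1 F g) (m1 F f)). rw HC (triA _ HC (m1 F g) (m1 F f)).
  rw HC (eq_sym (wl _ HC (m1 F g) (lunit (m1 F f)) (vinv (lunit (m1 F f))))).
  rewrite (invr _ HC), (hcid _ HC), (idr _ HC). rw HC (K2i _ HC (m1 F g) (m1 F f)). reflexivity.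
Qed.

Lemma MU (X : ob A) : Hm2 (bid (Gob X)) (Ghom (id1 X)) (id2 (id1 X)) = phi_u F X.
Proof.
  apply Huniq. unfold bid, sid. simpl.
  rewrite (m2_id _ _ _ HF), (hcid _ HC), (idl _ HC).
  rewrite (lconj _ HC). nrm HC. simp HC. rw HC (rnat_inv _ HC (phi_u F X)).
  rewrite (K3 _ HC). reflexivity.
Qed.

Lemma H_vinv {P Q : Bob} (a a' : Bhom P Q) (x : cell (bf a) (bf a')) :
  Hm2 a' a (vinv x) = vinv (Hm2 a a' x).
Proof.
  apply (inv_uniq _ HC). rewrite <- H_comp, (invl _ HA). apply H_id.
Qed.

Lemma MI {X Y : ob A} (f : hom X Y) :
  Hm2 (binv _ _ (Ghom f)) (Ghom (inv1 f)) (id2 (inv1 f)) = phi_i F f.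
Proof.
  apply (WR_inj _ HC (m1 F f)).
  assert (E : @Hm2 (Gob X) (Gob X) (bcomp _ _ _ (binv _ _ (Ghom f)) (Ghom f)) (bid (Gob X)) (ecell f)
    = @Hm2 (Gob X) (Gob X) (bcomp _ _ _ (binv _ _ (Ghom f)) (Ghom f)) (bid (Gob X))
        (vinv (id2 (id1 X)) ∘ ecell f ∘ id2 (inv1 f ⊙ f) ∘ (id2 (inv1 f) ⋆ id2 f))).
  { f_equal. rewrite (hcid _ HA), !(idr _ HA), (inv_id _ HA), (idl _ HA). reflexivity. }
  rewrite (H_comp (bcomp _ _ _ (binv _ _ (Ghom f)) (Ghom f)) (bcomp _ _ _ (Ghom (inv1 f)) (Ghom f)) (bid (Gob X))) in E.
  rewrite (H_comp (bcomp _ _ _ (Ghom (inv1 f)) (Ghom f)) (Ghom (inv1 f ⊙ f)) (bid (Gob X))) in E.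
  rewrite (H_comp (Ghom (inv1 f ⊙ f)) (Ghom (id1 X)) (bid (Gob X))) in E.
  rewrite (H_hc (binv _ _ (Ghom f)) (Ghom (inv1 f)) (Ghom f) (Ghom f)), (H_id (Ghom f) : Hm2 (Ghom f) (Ghom f) (id2 f) = id2 (m1 F f)), MC, M2, (H_vinv (bid (Gob X)) (Ghom (id1 X))), MU in E.
  pose proof (H_ecell (Ghom f)) as E2. simpl in E, E2. rewrite E2 in E. clear E2.
  pose proof (mor_ecell _ _ _ HF _ _ f) as E3.
  apply (canl _ HC (m2 F (ecell f) ∘ phi_c F (inv1 f) f)).
  transitivity (phi_u F X ∘ ecell (m1 F f)). 2: { symmetry. exact E3. }
  rewrite E. nrm HC. simp HC. reflexivity.
Qed.

End Cons.

From Stdlib Require Import FunctionalExtensionality.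

Lemma mor_ext {A C : BGData} (F : MorData A C)
  (m2' : forall (X Y : ob A) (f g : hom X Y), cell f g -> cell (m1 F f) (m1 F g))
  (pc' : forall (X Y Z : ob A) (g : hom Y Z) (f : hom X Y), cell (m1 F g ⊙ m1 F f) (m1 F (g ⊙ f)))
  (pu' : forall X : ob A, cell (id1 (m0 F X)) (m1 F (id1 X)))
  (pi' : forall (X Y : ob A) (f : hom X Y), cell (inv1 (m1 F f)) (m1 F (inv1 f)))
  (E2 : forall X Y f g a, m2' X Y f g a = m2 F a)
  (Ec : forall X Y Z g f, pc' X Y Z g f = phi_c F g f)
  (Eu : forall X, pu' X = phi_u F X)
  (Ei : forall X Y f, pi' X Y f = phi_i F f) :
  F = Build_MorData A C (fun X => m0 F X) (fun X Y f => m1 F f) m2' pc' pu' pi'.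
Proof.
  destruct F as [a b c d e g]. simpl in *.
  assert (c = m2') by (repeat (apply functional_extensionality_dep; intro); symmetry; auto).
  assert (d = pc') by (repeat (apply functional_extensionality_dep; intro); symmetry; auto).
  assert (e = pu') by (repeat (apply functional_extensionality_dep; intro); symmetry; auto).
  assert (g = pi') by (repeat (apply functional_extensionality_dep; intro); symmetry; auto).
  subst. reflexivity.
Qed.

Theorem lemma5p13 (A C : Bigroupoid) (F : MorData A C) (HF : IsMorphism F) :
  exists (B : Bigroupoid) (G : MorData A B) (H : MorData B C),
    IsMorphism G /\ IsMorphism H /\
    trivial_cofibration G /\ fibration H /\
    F = mcomp H G.
Proof.
  exists (Bgr F), (Gm F), (Hm F).
  split; [exact (Gmor F)|]. split; [exact (Hmor F HF)|].
  split; [exact (Gtc F)|]. split; [exact (Hfib F HF)|].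
  apply (mor_ext F).
  - intros. apply M2.
  - intros. simpl. rewrite (idr _ (bg_ax C)). apply (MC F HF).
  - intros. simpl. rewrite (idr _ (bg_ax C)). apply (MU F HF).
  - intros. simpl. rewrite (idr _ (bg_ax C)). apply (MI F HF).
Qed.
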